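(* Let $R$ be a ring and $S$ an $R$-module. The following are equivalent: (i) $S$ is flat over $R$; (ii) for every $R$-module $M$, property $(\#)$ holds for every finite family of submodules of $M$; (iii) property $(\#)$ holds for every finite family of submodules of $M = R^2$; (iv) for every $f \in R$, $\operatorname{Ann}_S(f) = (\operatorname{Ann}_R(f))S$, and property $(\#)$ holds for every finite family of ideals of $R$ (i.e., with $M = R$).
   Context: All rings are commutative with identity. For an $R$-module $S$, an $R$-module $M$ and a family $\{M_\lambda\}_{\lambda\in\Lambda}$ of submodules of $M$, property $(\#)$ is the equality $S \otimes_R \left(\bigcap_\lambda M_\lambda\right) = \bigcap_\lambda (S \otimes_R M_\lambda)$, where all modules are identified with their images in $S \otimes_R M$. When $M=R$ and $I$ is an ideal, $I \otimes_R S$ is identified with its image $IS$ in $S$. *)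

(* Defs.v *)
From HB Require Import structures.
From mathcomp Require Import all_boot all_order all_algebra.
Set Implicit Arguments. Unset Strict Implicit. Unset Printing Implicit Defensive.
Import GRing.Theory.
Local Open Scope ring_scope.

Definition is_submod (R : comPzRingType) (M : lmodType R) (N : M -> Prop) : Prop :=
  N 0 /\ (forall (a : R) (x y : M), N x -> N y -> N (a *: x + y)).

Definition is_ideal (R : comPzRingType) (I : R -> Prop) : Prop :=
  I 0 /\ (forall x y : R, I x -> I y -> I (x + y)) /\
  (forall a x : R, I x -> I (a * x)).

Definition bilinear_map (R : comPzRingType) (S M P : lmodType R)
    (b : S -> M -> P) : Prop :=
  (forall (a : R) s s' m, b (a *: s + s') m = a *: b s m + b s' m) /\
  (forall (a : R) s m m', b s (a *: m + m') = a *: b s m + b s m').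

(* Tensors of S (x)_R M are represented by formal sums  sum_i s_i (x) m_i,
   i.e. by lists of pairs; [tens_eq t1 t2] is equality in S (x)_R M,
   characterised by the universal property of the tensor product. *)
Definition tens_eval (R : comPzRingType) (S M P : lmodType R)
    (b : S -> M -> P) (t : seq (S * M)) : P :=
  \sum_(p <- t) b p.1 p.2.

Definition tens_eq (R : comPzRingType) (S M : lmodType R)
    (t1 t2 : seq (S * M)) : Prop :=
  forall (P : lmodType R) (b : S -> M -> P),
    bilinear_map b -> tens_eval b t1 = tens_eval b t2.

(* [t] lies in the image of S (x)_R N in S (x)_R M. *)
Definition in_tens_img (R : comPzRingType) (S M : lmodType R) (N : M -> Prop)
    (t : seq (S * M)) : Prop :=
  exists t' : seq (S * M), (forall p, p \in t' -> N p.2) /\ tens_eq t t'.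

Definition sharp_prop (R : comPzRingType) (S M : lmodType R) (I : Type)
    (Ms : I -> M -> Prop) : Prop :=
  forall t : seq (S * M),
    @in_tens_img R S M (fun m => forall i, Ms i m) t <->
    (forall i, @in_tens_img R S M (Ms i) t).

Definition flat (R : comPzRingType) (S : lmodType R) : Prop :=
  forall (N M : lmodType R) (f : {linear N -> M}), injective f ->
    forall t : seq (S * N),
      @tens_eq R S M [seq (p.1, f p.2) | p <- t] [::] -> @tens_eq R S N t [::].

Definition ideal_ext (R : comPzRingType) (S : lmodType R) (I : R -> Prop)
    (s : S) : Prop :=
  exists t : seq (R * S), (forall p, p \in t -> I p.1) /\
    s = \sum_(p <- t) p.1 *: p.2.

(* Main.v *)
Require Import Defs.
From HB Require Import structures.
From mathcomp Require Import all_boot all_order all_algebra.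
From mathcomp Require Import boolp.
From Stdlib Require List.
Set Implicit Arguments. Unset Strict Implicit. Unset Printing Implicit Defensive.
Import GRing.Theory.
Local Open Scope ring_scope.

Record premod (R : pzRingType) := Premod {
  pm_T : Type;
  pm_e : pm_T -> pm_T -> Prop;
  pm_z : pm_T;
  pm_add : pm_T -> pm_T -> pm_T;
  pm_opp : pm_T -> pm_T;
  pm_scl : R -> pm_T -> pm_T;
  pm_refl : forall x, pm_e x x;
  pm_sym : forall x y, pm_e x y -> pm_e y x;
  pm_trans : forall x y w, pm_e x y -> pm_e y w -> pm_e x w;
  pm_add_cong : forall x x' y y', pm_e x x' -> pm_e y y' -> pm_e (pm_add x y) (pm_add x' y');
  pm_opp_cong : forall x x', pm_e x x' -> pm_e (pm_opp x) (pm_opp x');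
  pm_scl_cong : forall a x x', pm_e x x' -> pm_e (pm_scl a x) (pm_scl a x');
  pm_addA : forall x y w, pm_e (pm_add x (pm_add y w)) (pm_add (pm_add x y) w);
  pm_addC : forall x y, pm_e (pm_add x y) (pm_add y x);
  pm_add0 : forall x, pm_e (pm_add pm_z x) x;
  pm_addN : forall x, pm_e (pm_add (pm_opp x) x) pm_z;
  pm_sclA : forall a b x, pm_e (pm_scl a (pm_scl b x)) (pm_scl (a * b) x);
  pm_scl1 : forall x, pm_e (pm_scl 1 x) x;
  pm_sclDr : forall a x y, pm_e (pm_scl a (pm_add x y)) (pm_add (pm_scl a x) (pm_scl a y));
  pm_sclDl : forall a b x, pm_e (pm_scl (a + b) x) (pm_add (pm_scl a x) (pm_scl b x))
}.

Section PreQuot.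
Variables (R : pzRingType) (PM : premod R).
Local Notation T := (pm_T PM).
Local Notation e := (@pm_e _ PM).
Local Notation z := (pm_z PM).
Local Notation add := (@pm_add _ PM).
Local Notation opp := (@pm_opp _ PM).
Local Notation scl := (@pm_scl _ PM).
Let e_refl := @pm_refl _ PM.
Let e_sym := @pm_sym _ PM.
Let e_trans := @pm_trans _ PM.
Let add_cong := @pm_add_cong _ PM.
Let opp_cong := @pm_opp_cong _ PM.
Let scl_cong := @pm_scl_cong _ PM.
Let addA_e := @pm_addA _ PM.
Let addC_e := @pm_addC _ PM.
Let add0_e := @pm_add0 _ PM.
Let addN_e := @pm_addN _ PM.
Let sclA_e := @pm_sclA _ PM.
Let scl1_e := @pm_scl1 _ PM.
Let sclDr_e := @pm_sclDr _ PM.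
Let sclDl_e := @pm_sclDl _ PM.
Hint Resolve e_refl e_sym e_trans add_cong opp_cong scl_cong addA_e addC_e add0_e addN_e sclA_e scl1_e sclDr_e sclDl_e : core.

Definition pq : Type := {C : T -> Prop | exists x, C = e x}.
Definition pq_class (x : T) : pq := exist _ (e x) (ex_intro _ x erefl).
Definition pq_rep (C : pq) : T := projT1 (cid (proj2_sig C)).

Lemma pq_repK C : pq_class (pq_rep C) = C.
Proof.
rewrite /pq_rep; case: (cid _) => x /= Hx; case: C Hx => C HC /= Hx.
subst C; congr exist; exact: Prop_irrelevance.
Qed.

Lemma pq_eqP x y : pq_class x = pq_class y <-> e x y.
Proof.
split.
- move=> H; have : e x = e y by move: H => [].
  by move=> ->; apply: e_refl.
- move=> Hxy; have Hexy : e x = e y.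
    apply: funext => w; apply: propext; split => H.
    + by apply: e_trans (e_sym Hxy) H.
    + by apply: e_trans Hxy H.
  rewrite /pq_class; move: (ex_intro _ x _) (ex_intro _ y _); rewrite Hexy => p1 p2.
  congr exist; exact: Prop_irrelevance.
Qed.

Lemma pq_rep_e x : e (pq_rep (pq_class x)) x.
Proof. apply/pq_eqP; exact: pq_repK. Qed.

HB.instance Definition _ := gen_eqMixin pq.
HB.instance Definition _ := gen_choiceMixin pq.

Definition pq_zero := pq_class z.
Definition pq_add (C D : pq) := pq_class (add (pq_rep C) (pq_rep D)).
Definition pq_opp (C : pq) := pq_class (opp (pq_rep C)).
Definition pq_scl a (C : pq) := pq_class (scl a (pq_rep C)).

Lemma pq_addE x y : pq_add (pq_class x) (pq_class y) = pq_class (add x y).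
Proof. by apply/pq_eqP; apply: add_cong; apply: pq_rep_e. Qed.
Lemma pq_oppE x : pq_opp (pq_class x) = pq_class (opp x).
Proof. by apply/pq_eqP; apply: opp_cong; apply: pq_rep_e. Qed.
Lemma pq_sclE a x : pq_scl a (pq_class x) = pq_class (scl a x).
Proof. by apply/pq_eqP; apply: scl_cong; apply: pq_rep_e. Qed.

Lemma pq_ind (P : pq -> Prop) : (forall x, P (pq_class x)) -> forall C, P C.
Proof. by move=> H C; rewrite -(pq_repK C). Qed.

Lemma pq_addA : associative pq_add.
Proof.
elim/pq_ind => x; elim/pq_ind => y; elim/pq_ind => w.
by rewrite !pq_addE; apply/pq_eqP.
Qed.
Lemma pq_addC : commutative pq_add.
Proof. by elim/pq_ind => x; elim/pq_ind => y; rewrite !pq_addE; apply/pq_eqP. Qed.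
Lemma pq_add0 : left_id pq_zero pq_add.
Proof. by elim/pq_ind => x; rewrite /pq_zero pq_addE; apply/pq_eqP. Qed.
Lemma pq_addN : left_inverse pq_zero pq_opp pq_add.
Proof. by elim/pq_ind => x; rewrite pq_oppE pq_addE; apply/pq_eqP. Qed.

HB.instance Definition _ := GRing.isZmodule.Build pq pq_addA pq_addC pq_add0 pq_addN.
Lemma pq_addE' x y : (pq_class x + pq_class y : pq) = pq_class (add x y).
Proof. rewrite -[pq_class x + pq_class y]/(pq_add _ _); exact: pq_addE. Qed.

Lemma pq_sclA a b v : pq_scl a (pq_scl b v) = pq_scl (a * b) v.
Proof. by elim/pq_ind: v => x; rewrite !pq_sclE; apply/pq_eqP. Qed.
Lemma pq_scl1 : left_id 1 pq_scl.
Proof. by elim/pq_ind => x; rewrite !pq_sclE; apply/pq_eqP. Qed.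
Lemma pq_sclDr : right_distributive pq_scl +%R.
Proof.
move=> a; elim/pq_ind => x; elim/pq_ind => y.
rewrite -[pq_class x + pq_class y]/(pq_add _ _) pq_addE !pq_sclE.
rewrite -[pq_class _ + pq_class _]/(pq_add _ _) pq_addE; apply/pq_eqP; auto.
Qed.
Lemma pq_sclDl v : {morph pq_scl^~ v: a b / a + b}.
Proof.
elim/pq_ind: v => x a b /=.
rewrite !pq_sclE -[pq_class _ + pq_class _]/(pq_add _ _) pq_addE; apply/pq_eqP; auto.
Qed.

HB.instance Definition _ := GRing.Zmodule_isLmodule.Build R pq pq_sclA pq_scl1 pq_sclDr pq_sclDl.

Lemma pq_sclE' a x : (a *: pq_class x : pq) = pq_class (scl a x).
Proof. exact: pq_sclE. Qed.
Lemma pq_zeroE : (0 : pq) = pq_class z.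
Proof. by []. Qed.

End PreQuot.

Section Bil.
Variables (R : comPzRingType) (S M P : lmodType R) (b : S -> M -> P).
Hypothesis hb : bilinear_map b.

Lemma bilDl s s' m : b (s + s') m = b s m + b s' m.
Proof. by rewrite -{1}[s]scale1r hb.1 scale1r. Qed.
Lemma bilDr s m m' : b s (m + m') = b s m + b s m'.
Proof. by rewrite -{1}[m]scale1r hb.2 scale1r. Qed.
Lemma bil0l m : b 0 m = 0.
Proof. have H : b 0 m + b 0 m = b 0 m + 0 by rewrite -bilDl !addr0. exact: addrI H. Qed.
Lemma bil0r s : b s 0 = 0.
Proof. have H : b s 0 + b s 0 = b s 0 + 0 by rewrite -bilDr !addr0. exact: addrI H. Qed.
Lemma bilZl a s m : b (a *: s) m = a *: b s m.
Proof. by rewrite -[a *: s]addr0 hb.1 bil0l addr0. Qed.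
Lemma bilZr a s m : b s (a *: m) = a *: b s m.
Proof. by rewrite -[a *: m]addr0 hb.2 bil0r addr0. Qed.
Lemma bilNl s m : b (- s) m = - b s m.
Proof. by rewrite -scaleN1r bilZl scaleN1r. Qed.
Lemma bil_sumr s (rho : seq (R * M)) :
  b s (\sum_(q <- rho) q.1 *: q.2) = \sum_(q <- rho) q.1 *: b s q.2.
Proof.
elim: rho => [|q rho IH]; first by rewrite !big_nil bil0r.
by rewrite !big_cons bilDr bilZr IH.
Qed.
Lemma bil_suml m (ts : seq S) :
  b (\sum_(s <- ts) s) m = \sum_(s <- ts) b s m.
Proof.
elim: ts => [|s ts IH]; first by rewrite !big_nil bil0l.
by rewrite !big_cons bilDl IH.
Qed.
Lemma bil_sumlF (I : Type) (r : seq I) (F : I -> S) m :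
  b (\sum_(i <- r) F i) m = \sum_(i <- r) b (F i) m.
Proof.
elim: r => [|i r IH]; first by rewrite !big_nil bil0l.
by rewrite !big_cons bilDl IH.
Qed.
End Bil.

Section Coef.
Variables (R : comPzRingType) (S M : lmodType R).

Definition coef (t : seq (S * M)) (m : M) : S := \sum_(p <- t | p.2 == m) p.1.
Definition flatc (c : seq (S * seq (R * M))) : seq (S * M) :=
  flatten [seq [seq (q.1 *: p.1, q.2) | q <- p.2] | p <- c].
Definition relsum (rho : seq (R * M)) : M := \sum_(q <- rho) q.1 *: q.2.
Definition valid (B : M -> Prop) (c : seq (S * seq (R * M))) :=
  forall p, p \in c -> B (relsum p.2).
Definition scal_t (a : R) (t : seq (S * M)) := [seq (a *: p.1, p.2) | p <- t].
Definition scalec (a : R) (c : seq (S * seq (R * M))) := [seq (a *: p.1, p.2) | p <- c].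

Lemma coef_cat t1 t2 m : coef (t1 ++ t2) m = coef t1 m + coef t2 m.
Proof. by rewrite /coef big_cat. Qed.
Lemma coef_nil m : coef [::] m = 0.
Proof. by rewrite /coef big_nil. Qed.
Lemma coef_cons p t m : coef (p :: t) m = (if p.2 == m then p.1 else 0) + coef t m.
Proof. by rewrite /coef big_cons; case: ifP => _; rewrite ?add0r. Qed.
Lemma coef_scal a t m : coef (scal_t a t) m = a *: coef t m.
Proof. by rewrite /coef big_map scaler_sumr. Qed.
Lemma coef_flatc c m :
  coef (flatc c) m = \sum_(p <- c) \sum_(q <- p.2 | q.2 == m) q.1 *: p.1.
Proof. by rewrite /coef /flatc big_flatten big_map; apply: eq_bigr => p _; rewrite big_map. Qed.
Lemma flatc_cat c1 c2 : flatc (c1 ++ c2) = flatc c1 ++ flatc c2.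
Proof. by rewrite /flatc map_cat flatten_cat. Qed.
Lemma coef_flatc_scale a c m : coef (flatc (scalec a c)) m = a *: coef (flatc c) m.
Proof.
rewrite !coef_flatc /scalec big_map scaler_sumr; apply: eq_bigr => p _ /=.
rewrite scaler_sumr; apply: eq_bigr => q _; by rewrite scalerA mulrC -scalerA.
Qed.
Lemma valid_cat B c1 c2 : valid B c1 -> valid B c2 -> valid B (c1 ++ c2).
Proof. by move=> h1 h2 p; rewrite mem_cat => /orP [] ?; [apply: h1|apply: h2]. Qed.
Lemma valid_scale B a c : valid B c -> valid B (scalec a c).
Proof. by move=> h p /mapP [p0 Hp0 ->]; exact: (h p0 Hp0). Qed.
Lemma valid_nil B : valid B [::].
Proof. by []. Qed.

Section SumCoef.
Variables (W : zmodType) (h : S -> M -> W).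
Hypothesis hadd : forall s s' m, h (s + s') m = h s m + h s' m.
Lemma h0 m : h 0 m = 0.
Proof. have H : h 0 m + h 0 m = h 0 m + 0 by rewrite -hadd !addr0. exact: addrI H. Qed.

Lemma sum_coef t (L : seq M) : uniq L -> (forall p, p \in t -> p.2 \in L) ->
  \sum_(p <- t) h p.1 p.2 = \sum_(m <- L) h (coef t m) m.
Proof.
move=> uL; elim: t => [|p t IH] Ht.
  by rewrite big_nil big1 // => m _; rewrite coef_nil h0.
rewrite big_cons IH; last by move=> q Hq; apply: Ht; rewrite in_cons Hq orbT.
under [RHS]eq_bigr do rewrite coef_cons hadd.
rewrite big_split /=; congr (_ + _).
rewrite (bigD1_seq p.2) //=; last by apply: Ht; rewrite in_cons eqxx.
rewrite eqxx big1 ?addr0 // => m /negPf; rewrite eq_sym => ->; exact: h0.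
Qed.

Lemma sum_coef_eq t1 t2 : (forall m, coef t1 m = coef t2 m) ->
  \sum_(p <- t1) h p.1 p.2 = \sum_(p <- t2) h p.1 p.2.
Proof.
move=> H; set L := undup [seq p.2 | p <- t1 ++ t2].
have uL : uniq L by apply: undup_uniq.
rewrite (sum_coef uL) ?(sum_coef uL); first by apply: eq_bigr => m _; rewrite H.
- by move=> p Hp; rewrite mem_undup map_f // mem_cat Hp orbT.
- by move=> p Hp; rewrite mem_undup map_f // mem_cat Hp.
Qed.
End SumCoef.

Lemma tens_eval_flatc (P : lmodType R) (b : S -> M -> P) c :
  bilinear_map b -> valid (fun x => x = 0) c -> tens_eval b (flatc c) = 0.
Proof.
move=> hb; elim: c => [|p c IH] Hv; first by rewrite /tens_eval big_nil.
rewrite /flatc map_cons /= /tens_eval big_cat /= -/(flatc c) -/(tens_eval b (flatc c)).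
rewrite IH; last by move=> q Hq; apply: Hv; rewrite in_cons Hq orbT.
rewrite big_map addr0.
under eq_bigr do rewrite /= (bilZl hb).
rewrite -bil_sumr //; have -> : \sum_(q <- p.2) q.1 *: q.2 = 0 by apply: (Hv p); rewrite in_cons eqxx.
exact: bil0r.
Qed.

Lemma tens_eval_coef (P : lmodType R) (b : S -> M -> P) t1 t2 :
  bilinear_map b -> (forall m, coef t1 m = coef t2 m) -> tens_eval b t1 = tens_eval b t2.
Proof. move=> hb; apply: sum_coef_eq => s s' m; exact: bilDl. Qed.

Definition cert_eq (t1 t2 : seq (S * M)) :=
  exists c, valid (fun x => x = 0) c /\
    forall m, coef t1 m = coef t2 m + coef (flatc c) m.

Lemma tens_eq_of_cert t1 t2 : cert_eq t1 t2 -> tens_eq t1 t2.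
Proof.
move=> [c [Hv Hc]] P b hb.
rewrite (@tens_eval_coef _ _ t1 (t2 ++ flatc c)) //; last by move=> m; rewrite coef_cat.
by rewrite /tens_eval big_cat /= -/(tens_eval b (flatc c)) tens_eval_flatc // addr0.
Qed.

Lemma cert_of_coef t1 t2 : (forall m, coef t1 m = coef t2 m) -> cert_eq t1 t2.
Proof. by move=> H; exists [::]; split=> // m; rewrite H /flatc /= coef_nil addr0. Qed.

Lemma ce_refl t : cert_eq t t.
Proof. exact: cert_of_coef. Qed.
Lemma ce_sym t1 t2 : cert_eq t1 t2 -> cert_eq t2 t1.
Proof.
move=> [c [Hv Hc]]; exists (scalec (-1) c); split; first exact: valid_scale.
by move=> m; rewrite coef_flatc_scale scaleN1r Hc addrK.
Qed.
Lemma ce_trans x y w : cert_eq x y -> cert_eq y w -> cert_eq x w.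
Proof.
move=> [c1 [Hv1 Hc1]] [c2 [Hv2 Hc2]]; exists (c1 ++ c2); split; first exact: valid_cat.
by move=> m; rewrite Hc1 Hc2 flatc_cat coef_cat -addrA (addrC (coef (flatc c2) m)).
Qed.
Lemma ce_add x x' y y' : cert_eq x x' -> cert_eq y y' -> cert_eq (x ++ y) (x' ++ y').
Proof.
move=> [c1 [Hv1 Hc1]] [c2 [Hv2 Hc2]]; exists (c1 ++ c2); split; first exact: valid_cat.
by move=> m; rewrite !coef_cat Hc1 Hc2 flatc_cat coef_cat addrACA.
Qed.
Lemma ce_scl a x x' : cert_eq x x' -> cert_eq (scal_t a x) (scal_t a x').
Proof.
move=> [c [Hv Hc]]; exists (scalec a c); split; first exact: valid_scale.
by move=> m; rewrite !coef_scal coef_flatc_scale Hc scalerDr.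
Qed.

Definition tensPM : premod R.
Proof.
refine (@Premod R (seq (S * M)) cert_eq [::] cat (scal_t (-1)) scal_t
  ce_refl ce_sym ce_trans ce_add (ce_scl (-1)) ce_scl _ _ _ _ _ _ _ _).
- by move=> x y w; apply: cert_of_coef => m; rewrite !coef_cat addrA.
- by move=> x y; apply: cert_of_coef => m; rewrite !coef_cat addrC.
- by move=> x; apply: cert_of_coef => m; rewrite !coef_cat coef_nil add0r.
- by move=> x; apply: cert_of_coef => m; rewrite !coef_cat coef_scal coef_nil scaleN1r addNr.
- by move=> a b x; apply: cert_of_coef => m; rewrite !coef_scal scalerA.
- by move=> x; apply: cert_of_coef => m; rewrite !coef_scal scale1r.
- by move=> a x y; apply: cert_of_coef => m; rewrite !coef_cat !coef_scal coef_cat scalerDr.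
- by move=> a b x; apply: cert_of_coef => m; rewrite !coef_cat !coef_scal scalerDl.
Defined.

Definition tensQ : lmodType R := pq tensPM.
Definition tb (s : S) (m : M) : tensQ := pq_class (PM:=tensPM) [:: (s, m)].

Lemma if_oppN (V : zmodType) (b : bool) (x : V) : (if b then - x else 0) = - (if b then x else 0).
Proof. by case: b; rewrite ?oppr0. Qed.
Lemma zmod_id3 (V : zmodType) (x y : V) : x = y + (x - y).
Proof. by rewrite addrC subrK. Qed.

Lemma tb_bil : bilinear_map tb.
Proof.
split.
- move=> a s s' m; rewrite /tb pq_sclE' pq_addE'; apply/pq_eqP; apply: cert_of_coef => z /=.
  rewrite !coef_cons !coef_nil !addr0.
  by case: (m == z); rewrite ?addr0.
- move=> a s m m'; rewrite /tb pq_sclE' pq_addE'; apply/pq_eqP.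
  exists [:: (s, [:: (1, a *: m + m'); (-a, m); (-1, m')])]; split.
  + move=> p; rewrite inE => /eqP ->; rewrite /relsum !big_cons big_nil /=.
    by rewrite scale1r addr0 scaleNr scaleN1r -opprD subrr.
  + move=> z /=; rewrite /flatc /= !coef_cons !coef_nil /= !addr0.
    rewrite scale1r scaleNr scaleN1r.
    rewrite !if_oppN -opprD; exact: zmod_id3.
Qed.

Lemma tens_eval_tb t : tens_eval tb t = pq_class (PM:=tensPM) t.
Proof.
elim: t => [|p t IH]; first by rewrite /tens_eval big_nil.
rewrite /tens_eval big_cons -/(tens_eval tb t) IH /tb.
by rewrite pq_addE'; case: p.
Qed.

Lemma cert_of_tens_eq t1 t2 : tens_eq t1 t2 -> cert_eq t1 t2.
Proof.
move=> H; have := H tensQ tb tb_bil; rewrite !tens_eval_tb; exact: (proj1 (pq_eqP _ _)).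
Qed.

Lemma tens_eq_cert t1 t2 : tens_eq t1 t2 <-> cert_eq t1 t2.
Proof. split; [exact: cert_of_tens_eq | exact: tens_eq_of_cert]. Qed.
End Coef.

Definition RC (R : comPzRingType) (S : lmodType R) :=
  forall n (a : 'I_n -> R) (s : 'I_n -> S), \sum_i a i *: s i = 0 ->
  exists ts : seq (S * {ffun 'I_n -> R}),
    (forall p, p \in ts -> \sum_i a i * p.2 i = 0) /\
    (forall i, s i = \sum_(p <- ts) p.2 i *: p.1).

Section Submod.
Variables (R : comPzRingType) (M : lmodType R) (B : M -> Prop).
Hypothesis HB : is_submod B.
Lemma sm0 : B 0. Proof. exact: HB.1. Qed.
Lemma smD x y : B x -> B y -> B (x + y).
Proof. by move=> hx hy; rewrite -[x]scale1r; apply: HB.2. Qed.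
Lemma smZ a x : B x -> B (a *: x).
Proof. by move=> hx; rewrite -[a *: x]addr0; apply: HB.2 => //; exact: sm0. Qed.
Lemma smN x : B x -> B (- x).
Proof. by move=> hx; rewrite -scaleN1r; apply: smZ. Qed.
Lemma smB x y : B x -> B y -> B (x - y).
Proof. by move=> hx hy; apply: smD => //; apply: smN. Qed.
Lemma sm_sum (I : Type) (r : seq I) (P : pred I) (F : I -> M) :
  (forall i, P i -> B (F i)) -> B (\sum_(i <- r | P i) F i).
Proof.
move=> H; elim: r => [|i r IH]; first by rewrite big_nil; exact: sm0.
by rewrite big_cons; case: ifP => // Pi; apply: smD => //; apply: H.
Qed.
End Submod.

Section Elim.
Variables (R : comPzRingType) (S M : lmodType R).
Hypothesis HRC : RC S.
Variable (B : M -> Prop).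
Hypothesis HB : is_submod B.

Definition cs (rho : seq (R * M)) (m : M) : R := \sum_(q <- rho | q.2 == m) q.1.

Lemma coef_flatc2 (c : seq (S * seq (R * M))) m : coef (flatc c) m = \sum_(p <- c) cs p.2 m *: p.1.
Proof. by rewrite coef_flatc; apply: eq_bigr => p _; rewrite /cs scaler_suml. Qed.

Section Step.
Variables (c : seq (S * seq (R * M))) (y0 : M).
Hypothesis Hv : valid B c.
Hypothesis Hy0 : coef (flatc c) y0 = 0.

Let n := size c.
Let d0 : S * seq (R * M) := (0, [::]).
Let ci (i : 'I_n) := nth d0 c i.
Let ci_in i : ci i \in c.
Proof. by rewrite /ci mem_nth. Qed.

Lemma sum_c_ord (V : zmodType) (F : S * seq (R * M) -> V) :
  \sum_(p <- c) F p = \sum_(i < n) F (ci i).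
Proof. by rewrite (big_nth d0) big_mkord. Qed.

Definition newrho (β : {ffun 'I_n -> R}) : seq (R * M) :=
  flatten [seq [seq (β i * q.1, q.2) | q <- (ci i).2] | i <- index_enum 'I_n].
Definition filt (rho : seq (R * M)) := [seq q <- rho | q.2 != y0].

Lemma cs_newrho β m : cs (newrho β) m = \sum_i β i * cs (ci i).2 m.
Proof.
rewrite /cs /newrho big_flatten big_map; apply: eq_bigr => i _.
by rewrite big_map mulr_sumr.
Qed.
Lemma relsum_newrho β : relsum (newrho β) = \sum_i β i *: relsum (ci i).2.
Proof.
rewrite /relsum /newrho big_flatten big_map; apply: eq_bigr => i _.
by rewrite big_map scaler_sumr; apply: eq_bigr => q _; rewrite scalerA.
Qed.
Lemma cs_filt rho m : cs (filt rho) m = if m == y0 then 0 else cs rho m.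
Proof.
rewrite /cs /filt big_filter_cond; case: eqP => [->|/eqP Hm].
  by rewrite big_pred0 // => q; case: eqP.
apply: eq_bigl => q /=; case: (eqVneq q.2 m) => [->|_]; by rewrite ?Hm ?andbF ?andbT.
Qed.
Lemma relsum_filt rho : relsum (filt rho) = relsum rho - cs rho y0 *: y0.
Proof.
have H2 : \sum_(q <- rho | ~~ (q.2 != y0)) q.1 *: q.2 = cs rho y0 *: y0.
  rewrite /cs scaler_suml; apply: eq_big => q; first by rewrite negbK.
  by rewrite negbK => /eqP ->.
by rewrite /relsum /filt big_filter [in RHS](bigID (fun q => q.2 != y0)) /= H2 addrK.
Qed.
Let α (i : 'I_n) := cs (ci i).2 y0.
Lemma rel_α : \sum_i α i *: (ci i).1 = 0.
Proof. by rewrite -[RHS]Hy0 coef_flatc2 (sum_c_ord (fun p => cs p.2 y0 *: p.1)). Qed.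

Lemma elim_step : exists c', valid B c' /\
  (forall m, coef (flatc c') m = if m == y0 then 0 else coef (flatc c) m) /\
  (forall p, p \in c' -> forall q, q \in p.2 -> q.2 != y0 /\
     exists2 p0, p0 \in c & q.2 \in [seq q0.2 | q0 <- p0.2]).
Proof.
have [ts [Hts Hs]] := HRC rel_α.
exists [seq (p.1, filt (newrho p.2)) | p <- ts]; split; [|split].
- move=> p /mapP [[τ β] Hp ->] /=; rewrite relsum_filt relsum_newrho cs_newrho.
  have -> : \sum_i β i * cs (ci i).2 y0 = 0.
    by rewrite -[RHS](Hts _ Hp); apply: eq_bigr => i _; rewrite mulrC.
  rewrite scale0r subr0; apply: (sm_sum HB) => i _; apply: (smZ HB); exact: Hv (ci_in i).
- move=> m; rewrite !coef_flatc2 big_map /=.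
  under eq_bigr do rewrite cs_filt.
  case: eqP => Hm; first by rewrite big1 // => p _; rewrite scale0r.
  under eq_bigr do rewrite cs_newrho scaler_suml.
  rewrite exchange_big /= (sum_c_ord (fun p => cs p.2 m *: p.1)); apply: eq_bigr => i _ /=.
  rewrite [(ci i).1]Hs scaler_sumr; apply: eq_bigr => p _.
  by rewrite scalerA mulrC.
- move=> p /mapP [[τ β] Hp ->] q /=; rewrite mem_filter => /andP [Hq Hin]; split => //.
  move: Hin => /flattenP [r /mapP [i _ ->] /mapP [q0 Hq0 ->]].
  exists (ci i); first exact: ci_in.
  by apply: (map_f (fun q1 : R * M => q1.2) Hq0).
Qed.
End Step.

Lemma elim_main (G : M -> Prop) (u : seq (S * M)) :
  (forall p, p \in u -> G p.2) ->
  forall (L : seq M) (c : seq (S * seq (R * M))), valid B c ->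
  (forall m, coef u m = coef (flatc c) m) ->
  (forall p, p \in c -> forall q, q \in p.2 -> G q.2 \/ q.2 \in L) ->
  exists c', valid B c' /\ (forall m, coef u m = coef (flatc c') m) /\
    (forall p, p \in c' -> forall q, q \in p.2 -> G q.2).
Proof.
move=> Hu L; elim: L => [|y0 L IH] c Hv Hc HL.
  exists c; split=> //; split=> // p Hp q Hq; by case: (HL p Hp q Hq).
case: (pselect (G y0)) => Gy0.
  apply: IH Hv Hc _ => p Hp q Hq; case: (HL p Hp q Hq) => [|]; first by left.
  by rewrite in_cons => /orP [/eqP ->|]; [left|right].
have Hu0 : coef u y0 = 0.
  rewrite /coef big1_seq // => p /andP [/eqP Hp Hpu]; exfalso; apply: Gy0.
  by rewrite -Hp; apply: Hu.
have [c' [Hv' [Hc' Hel]]] := elim_step Hv (etrans (esym (Hc y0)) Hu0).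
apply: (IH c' Hv').
  by move=> m; rewrite Hc' Hc; case: eqP => // ->; rewrite -Hc.
move=> p Hp q Hq; have [Hqy [p0 Hp0 Hq0]] := Hel p Hp q Hq.
move: Hq0 => /mapP [q0 Hq0 Heq]; rewrite Heq.
case: (HL p0 Hp0 q0 Hq0) => [|]; first by left.
by rewrite in_cons => /orP [/eqP Hy|]; [move: Hqy; rewrite Heq Hy eqxx|right].
Qed.

Lemma elim_full (G : M -> Prop) (u : seq (S * M)) (c : seq (S * seq (R * M))) :
  (forall p, p \in u -> G p.2) -> valid B c ->
  (forall m, coef u m = coef (flatc c) m) ->
  exists c', valid B c' /\ (forall m, coef u m = coef (flatc c') m) /\
    (forall p, p \in c' -> forall q, q \in p.2 -> G q.2).
Proof.
move=> Hu Hv Hc; apply: (elim_main Hu (L := flatten [seq [seq q.2 | q <- p.2] | p <- c])) Hv Hc _.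
move=> p Hp q Hq; right; apply/flattenP; exists [seq q.2 | q <- p.2]; last exact: map_f.
exact: map_f.
Qed.
End Elim.

Section Cons.
Variables (R : comPzRingType) (S : lmodType R).
Hypothesis HRC : RC S.

Lemma sum_flatc (M : lmodType R) (V : zmodType) (F : S * M -> V) (c : seq (S * seq (R * M))) :
  \sum_(p <- flatc c) F p = \sum_(p <- c) \sum_(q <- p.2) F (q.1 *: p.1, q.2).
Proof.
elim: c => [|p c IH]; first by rewrite /flatc !big_nil.
by rewrite /flatc /= big_cat /= -/(flatc c) IH big_cons big_map.
Qed.

Lemma submod0 (M : lmodType R) : is_submod (fun x : M => x = 0).
Proof. by split=> // a x y -> ->; rewrite scaler0 addr0. Qed.

Lemma RC_flat : flat S.
Proof.
move=> N M f finj t H.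
have [c [Hv Hc]] := cert_of_tens_eq H.
have Hc' : forall m, coef [seq (p.1, f p.2) | p <- t] m = coef (flatc c) m.
  by move=> m; rewrite Hc coef_nil add0r.
have Hu : forall p, p \in [seq (p.1, f p.2) | p <- t] -> exists n, p.2 = f n.
  by move=> p /mapP [p0 _ ->]; exists p0.2.
have [c' [Hv' [Hc'' HG]]] := @elim_full _ _ _ HRC _ (@submod0 M) (fun m => exists n, m = f n) _ _ Hu Hv Hc'.
pose lift (m : M) : N := match pselect (exists n, m = f n) with
  | left h => projT1 (cid h) | right _ => 0 end.
have liftK m : (exists n, m = f n) -> f (lift m) = m.
  rewrite /lift => h; case: (pselect _) => [h'|//].
  by case: (cid h') => n /= ->.
have lift_f n : lift (f n) = n by apply: finj; rewrite liftK //; exists n.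
move=> P b hb; rewrite /tens_eval big_nil.
transitivity (\sum_(p <- [seq (p.1, f p.2) | p <- t]) b p.1 (lift p.2)).
  by rewrite big_map; apply: eq_bigr => p _ /=; rewrite lift_f.
rewrite (sum_coef_eq (h := fun s m => b s (lift m)) _ Hc''); last first.
  by move=> s s' m; apply: bilDl.
rewrite (sum_flatc (fun p => b p.1 (lift p.2))) big1_seq // => p /andP [_ Hp] /=.
have -> : \sum_(q <- p.2) b (q.1 *: p.1) (lift q.2) =
          b p.1 (\sum_(q <- [seq (q.1, lift q.2) | q <- p.2]) q.1 *: q.2).
  by rewrite (bil_sumr hb) big_map; apply: eq_bigr => q _; rewrite (bilZl hb).
have -> : \sum_(q <- [seq (q.1, lift q.2) | q <- p.2]) q.1 *: q.2 = 0.
  apply: finj; rewrite linear_sum linear0 big_map.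
  rewrite -[RHS](Hv' p Hp) /relsum; apply: eq_big_seq => q Hq /=.
  by rewrite linearZ liftK //; exact: (HG p Hp q Hq).
exact: (bil0r hb).
Qed.

Lemma tens_eq_sym (M : lmodType R) (t1 t2 : seq (S * M)) : tens_eq t1 t2 -> tens_eq t2 t1.
Proof. by move=> H P b hb; rewrite (H P b hb). Qed.
Lemma tens_eq_trans (M : lmodType R) (t1 t2 t3 : seq (S * M)) :
  tens_eq t1 t2 -> tens_eq t2 t3 -> tens_eq t1 t3.
Proof. by move=> H1 H2 P b hb; rewrite (H1 P b hb) (H2 P b hb). Qed.

Lemma inter2 (M : lmodType R) (A Bp : M -> Prop) : is_submod A -> is_submod Bp ->
  forall t : seq (S * M), in_tens_img A t -> in_tens_img Bp t -> in_tens_img (fun m => A m /\ Bp m) t.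
Proof.
move=> sA sB t [tA [HA HtA]] [tB [HB HtB]].
have [c [Hv Hc]] := cert_of_tens_eq (tens_eq_trans (tens_eq_sym HtA) HtB).
set cB := [seq (p.1, [:: (1, p.2)]) | p <- tB] ++ c.
have HvB : valid Bp cB.
  move=> p; rewrite mem_cat => /orP [/mapP [p0 Hp0 ->]|Hp].
    by rewrite /relsum big_cons big_nil /= scale1r addr0; apply: HB.
  by rewrite (Hv p Hp); exact: (sm0 sB).
have HcB : forall m, coef tA m = coef (flatc cB) m.
  move=> m; rewrite Hc /cB flatc_cat coef_cat; congr (_ + _).
  rewrite coef_flatc2 big_map /coef big_mkcond /=; apply: eq_bigr => p _.
  by rewrite /cs big_cons big_nil /=; case: ifP; rewrite ?addr0 ?scale1r ?add0r ?scale0r.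
have [c' [Hv' [Hc' HG]]] := @elim_full _ _ _ HRC _ sB A _ _ HA HvB HcB.
exists [seq (p.1, relsum p.2) | p <- c']; split.
  move=> p /mapP [p0 Hp0 ->] /=; split; last exact: Hv'.
  rewrite /relsum big_seq; apply: (sm_sum sA) => q Hq; apply: (smZ sA); exact: HG Hp0 q Hq.
apply: (tens_eq_trans HtA) => P b hb.
rewrite /tens_eval (sum_coef_eq (h := fun s m => b s m) _ Hc'); last by move=> s s' m; apply: bilDl.
rewrite (sum_flatc (fun p => b p.1 p.2)) big_map; apply: eq_bigr => p _ /=.
rewrite /relsum (bil_sumr hb); apply: eq_bigr => q _; exact: (bilZl hb).
Qed.

Lemma sharp_of_RC (M : lmodType R) (I : finType) (Ms : I -> M -> Prop) :
  (forall i, is_submod (Ms i)) -> sharp_prop S Ms.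
Proof.
move=> HMs t; split.
  by move=> [t' [H1 H2]] i; exists t'; split => // p Hp; exact: H1 p Hp i.
move=> H.
have Hl : forall l : seq I, is_submod (fun m => forall i, i \in l -> Ms i m).
  move=> l; split; first by move=> i _; exact: (sm0 (HMs i)).
  by move=> a x y hx hy i hi; apply: (HMs i).2; [apply: hx|apply: hy].
suff : forall l : seq I, @in_tens_img R S M (fun m => forall i, i \in l -> Ms i m) t.
  by move=> /(_ (enum I)) [t' [H1 H2]]; exists t'; split => // p Hp i; apply: H1 => //; rewrite mem_enum.
elim => [|i l IH]; first by exists t; split.
have [t' [H1 H2]] := inter2 (HMs i) (Hl l) (H i) IH.
exists t'; split => // p Hp j; rewrite in_cons => /orP [/eqP ->|Hj].
  exact: (H1 p Hp).1.
exact: (H1 p Hp).2.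
Qed.
End Cons.

Section R2.
Variables (R : comPzRingType) (S : lmodType R).

Definition v2 (x y : R) : 'rV[R]_2 := \row_(j < 2) (if j == ord0 then x else y).
Lemma v2_0 x y : v2 x y ord0 ord0 = x. Proof. by rewrite mxE. Qed.
Lemma v2_1 x y : v2 x y ord0 ord_max = y. Proof. by rewrite mxE. Qed.

Definition b0 (s : S) (v : 'rV[R]_2) : S := v ord0 ord0 *: s.
Lemma b0_bil : bilinear_map b0.
Proof.
split.
- by move=> a s s' v; rewrite /b0 scalerDr !scalerA mulrC.
- by move=> a s v v'; rewrite /b0 !mxE scalerDl scalerA.
Qed.

Lemma v2_scale c : v2 c 0 = c *: v2 1 0.
Proof. by apply/matrixP => i j; rewrite !mxE; case: ifP; rewrite ?mulr1 ?mulr0. Qed.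
Lemma v2_split f : v2 1 f = f *: v2 0 1 + v2 1 0.
Proof. by apply/matrixP => i j; rewrite !mxE; case: ifP; rewrite ?mulr1 ?mulr0 ?add0r ?addr0. Qed.

Lemma tens_eval1 (M P : lmodType R) (b : S -> M -> P) s m : tens_eval b [:: (s, m)] = b s m.
Proof. by rewrite /tens_eval big_cons big_nil addr0. Qed.

Lemma proj_witness (Is : R -> Prop) (s : S) (t : seq (S * 'rV[R]_2)) :
  tens_eq [:: (s, v2 1 0)] t -> (forall p, p \in t -> Is (p.2 ord0 ord0)) ->
  ideal_ext Is s.
Proof.
move=> Ht HI; exists [seq ((p.2 : 'rV[R]_2) ord0 ord0, p.1) | p : S * 'rV[R]_2 <- t]; split.
  by move=> p /mapP [p0 Hp0 ->]; exact: HI.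
have := Ht S b0 b0_bil; rewrite tens_eval1 /b0 v2_0 scale1r => ->.
by rewrite /tens_eval big_map.
Qed.

Lemma iii_iv :
  (forall (I : finType) (Ms : I -> 'rV[R]_2 -> Prop),
     (forall i, is_submod (Ms i)) -> sharp_prop S Ms) ->
  (forall (f : R) (s : S), f *: s = 0 <-> ideal_ext (fun a : R => a * f = 0) s) /\
  (forall (I : finType) (Is : I -> R -> Prop),
     (forall i, is_ideal (Is i)) ->
     forall s : S,
       ideal_ext (fun a => forall i, Is i a) s <-> (forall i, ideal_ext (Is i) s)).
Proof.
move=> H; split.
- move=> f s; split; last first.
    move=> [l [Hl ->]]; rewrite scaler_sumr big1_seq // => p /andP [_ Hp].
    by rewrite scalerA mulrC Hl // scale0r.
  move=> hfs.
  pose Ms (i : bool) (v : 'rV[R]_2) : Prop :=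
    if i then exists r, v = r *: v2 1 f else v ord0 ord_max = 0.
  have HMs : forall i, is_submod (Ms i).
    case; split.
    + by exists 0; rewrite scale0r.
    + by move=> a x y [r1 ->] [r2 ->]; exists (a * r1 + r2); rewrite scalerDl scalerA.
    + by rewrite /Ms /= mxE.
    + by move=> a x y /= hx hy; rewrite !mxE hx hy mulr0 addr0.
  have [_ H2] := H _ Ms HMs [:: (s, v2 1 0)].
  have [|t [Ht1 Ht2]] := H2.
    case.
    + exists [:: (s, v2 1 f)]; split.
        by move=> p; rewrite inE => /eqP -> /=; exists 1; rewrite scale1r.
      move=> P b hb; rewrite !tens_eval1 (v2_split f) hb.2 -(bilZl hb) hfs (bil0l hb) add0r.
      by [].
    + exists [:: (s, v2 1 0)]; split => //.
      by move=> p; rewrite inE => /eqP -> /=; rewrite v2_1.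
  apply: (proj_witness Ht2) => p Hp.
  have [r Hr] := Ht1 p Hp true; have := Ht1 p Hp false; rewrite /= Hr !mxE.
  by rewrite !mulr1.
- move=> I Is HIs s; split.
    by move=> [l [Hl ->]] i; exists l; split => // p Hp; exact: Hl p Hp i.
  move=> HI.
  pose Ms (i : I) (v : 'rV[R]_2) : Prop := Is i (v ord0 ord0) /\ v ord0 ord_max = 0.
  have HMs : forall i, is_submod (Ms i).
    move=> i; have [I0 [ID IM]] := HIs i; split.
      by rewrite /Ms !mxE.
    move=> a x y [hx1 hx2] [hy1 hy2]; rewrite /Ms !mxE hx2 hy2 mulr0 addr0; split => //.
    by apply: ID => //; apply: IM.
  have [_ H2] := H _ Ms HMs [:: (s, v2 1 0)].
  have [|t [Ht1 Ht2]] := H2.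
    move=> i; have [l [Hl Hs]] := HI i.
    exists [seq (p.2, v2 p.1 0) | p <- l]; split.
      by move=> p /mapP [p0 Hp0 ->]; rewrite /Ms /= v2_0 v2_1; split => //; exact: Hl.
    move=> P b hb; rewrite tens_eval1 /tens_eval big_map Hs.
    under [RHS]eq_bigr do rewrite /= v2_scale (bilZr hb) -(bilZl hb).
    by rewrite (bil_sumlF hb).
  apply: (proj_witness Ht2) => p Hp i; exact: (Ht1 p Hp i).1.
Qed.
End R2.

Section IvRC.
Variables (R : comPzRingType) (S : lmodType R).
Hypothesis Ha : forall (f : R) (s : S), f *: s = 0 <-> ideal_ext (fun a : R => a * f = 0) s.
Hypothesis Hb : forall (I : finType) (Is : I -> R -> Prop),
  (forall i, is_ideal (Is i)) -> forall s : S,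
  ideal_ext (fun a => forall i, Is i a) s <-> (forall i, ideal_ext (Is i) s).

Definition choosef (T : Type) (x0 : T) (P : R -> T -> Prop) (c : R) : T :=
  match pselect (exists x, P c x) with left h => projT1 (cid h) | right _ => x0 end.
Lemma choosefP T x0 (P : R -> T -> Prop) c : (exists x, P c x) -> P c (choosef x0 P c).
Proof. by rewrite /choosef => h; case: pselect => [h'|//]; case: (cid h'). Qed.

Definition ext n (x0 : R) (β : 'I_n -> R) : {ffun 'I_n.+1 -> R} :=
  [ffun i => if unlift ord0 i is Some j then β j else x0].
Lemma ext0 n x0 (β : 'I_n -> R) : ext x0 β ord0 = x0.
Proof. by rewrite ffunE unlift_none. Qed.
Lemma extS n x0 (β : 'I_n -> R) j : ext x0 β (lift ord0 j) = β j.
Proof. by rewrite ffunE liftK. Qed.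

Lemma iv_RC : RC S.
Proof.
move=> n; elim: n => [|n IH] a s Hrel.
  by exists [::]; split => // -[].
rewrite big_ord_recl in Hrel.
set a0 := a ord0 in Hrel; set s0 := s ord0 in Hrel.
set v := \sum_(i < n) a (lift ord0 i) *: s (lift ord0 i) in Hrel.
have Hv : v = - (a0 *: s0).
  by apply/eqP; rewrite -addr_eq0 addrC Hrel.
pose I' := fun x : R => exists g : {ffun 'I_n -> R}, x = \sum_i g i * a (lift ord0 i).
pose J := fun x : R => exists d, x = d * a0.
pose Is := fun i : bool => if i then I' else J.
have HIs : forall i, is_ideal (Is i).
  case; (split; [|split]).
  - by exists [ffun => 0]; rewrite big1 // => i _; rewrite ffunE mul0r.
  - move=> x y [g1 ->] [g2 ->]; exists [ffun i => g1 i + g2 i].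
    by rewrite -big_split; apply: eq_bigr => i _; rewrite ffunE mulrDl.
  - move=> b x [g ->]; exists [ffun i => b * g i].
    by rewrite mulr_sumr; apply: eq_bigr => i _; rewrite ffunE mulrA.
  - by exists 0; rewrite mul0r.
  - by move=> x y [d1 ->] [d2 ->]; exists (d1 + d2); rewrite mulrDl.
  - by move=> b x [d ->]; exists (b * d); rewrite mulrA.
have [l [Hl Hvl]] : ideal_ext (fun x => forall i, Is i x) v.
  apply/(Hb HIs); case.
  - exists [seq (a (lift ord0 i), s (lift ord0 i)) | i <- index_enum 'I_n]; split.
      move=> p /mapP [i _ ->] /=; exists [ffun j => (j == i)%:R].
      rewrite (bigD1 i) //= ffunE eqxx mul1r big1 ?addr0 // => j /negPf Hj.
      by rewrite ffunE Hj mul0r.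
    by rewrite big_map.
  - exists [:: (a0, - s0)]; split.
      by move=> p; rewrite inE => /eqP -> /=; exists 1; rewrite mul1r.
    by rewrite big_cons big_nil addr0 /= scalerN.
pose dfun := choosef 0 (fun c d => c = d * a0).
pose gfun := choosef [ffun => 0] (fun c (g : {ffun 'I_n -> R}) => c = \sum_i g i * a (lift ord0 i)).
have Hd : forall p, p \in l -> p.1 = dfun p.1 * a0.
  by move=> p Hp; apply: (@choosefP _ 0 (fun c d => c = d * a0)); exact: (Hl p Hp false).
have Hg : forall p, p \in l -> p.1 = \sum_i gfun p.1 i * a (lift ord0 i).
  move=> p Hp; apply: (@choosefP _ [ffun => 0] (fun c (g : {ffun 'I_n -> R}) => c = \sum_i g i * a (lift ord0 i))).
  exact: (Hl p Hp true).
pose w := s0 + \sum_(p <- l) dfun p.1 *: p.2.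
have [l2 [Hl2 Hw]] : ideal_ext (fun e => e * a0 = 0) w.
  apply/Ha; rewrite /w scalerDr scaler_sumr.
  rewrite (eq_big_seq (fun p => p.1 *: p.2)); first by rewrite -Hvl Hv addrN.
  by move=> p Hp; rewrite scalerA mulrC -Hd.
pose s'' := fun i : 'I_n => s (lift ord0 i) - \sum_(p <- l) gfun p.1 i *: p.2.
have Hrel' : \sum_i a (lift ord0 i) *: s'' i = 0.
  rewrite /s''; under eq_bigr do rewrite scalerBr scaler_sumr.
  rewrite sumrB -/v exchange_big /=.
  rewrite (eq_big_seq (fun p => p.1 *: p.2)) -?Hvl ?subrr // => p Hp.
  rewrite [in RHS](Hg p Hp) scaler_suml; apply: eq_bigr => i _.
  by rewrite scalerA mulrC.
have [ts' [Hts' Hs']] := IH _ _ Hrel'.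
exists ([seq (p.1, ext 0 (p.2 : {ffun 'I_n -> R})) | p : S * {ffun 'I_n -> R} <- ts'] ++
        [seq (p.2, ext (- dfun p.1) (gfun p.1 : {ffun 'I_n -> R})) | p <- l] ++
        [seq (p.2, ext p.1 (fun _ : 'I_n => 0)) | p <- l2]); split.
  move=> q; rewrite !mem_cat => /orP [|/orP []] /mapP [p Hp ->] /=;
    rewrite big_ord_recl ext0.
  - under eq_bigr do rewrite extS.
    by rewrite mulr0 add0r (Hts' p Hp).
  - under eq_bigr do rewrite extS mulrC.
    by rewrite -(Hg p Hp) mulrN mulrC -(Hd p Hp) addNr.
  - under eq_bigr do rewrite extS mulr0.
    by rewrite big1 // addr0 mulrC; exact: Hl2.
move=> i; case: (unliftP ord0 i) => [j ->|->].
- rewrite !big_cat !big_map /=.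
  under eq_bigr do rewrite extS.
  under [X in _ + (X + _)]eq_bigr do rewrite extS.
  under [X in _ + (_ + X)]eq_bigr do rewrite extS scale0r.
  by rewrite big1_eq addr0 -Hs' /s'' subrK.
- rewrite !big_cat !big_map /=.
  under eq_bigr do rewrite ext0 scale0r.
  under [X in _ + (X + _)]eq_bigr do rewrite ext0 scaleNr.
  under [X in _ + (_ + X)]eq_bigr do rewrite ext0.
  by rewrite big1_eq add0r sumrN -Hw /w [s0 + _]addrC addKr.
Qed.
End IvRC.

Section NQ.
Variables (R : comPzRingType) (n : nat) (a : 'I_n -> R).

Definition ev (x : {ffun 'I_n -> R}) : R := \sum_i x i * a i.
Definition fadd (x y : {ffun 'I_n -> R}) := [ffun i => x i + y i].
Definition fopp (x : {ffun 'I_n -> R}) := [ffun i => - x i].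
Definition fscl (r : R) (x : {ffun 'I_n -> R}) := [ffun i => r * x i].
Lemma ev_add x y : ev (fadd x y) = ev x + ev y.
Proof. by rewrite /ev -big_split; apply: eq_bigr => i _; rewrite ffunE mulrDl. Qed.
Lemma ev_opp x : ev (fopp x) = - ev x.
Proof. by rewrite /ev -sumrN; apply: eq_bigr => i _; rewrite ffunE mulNr. Qed.
Lemma ev_scl r x : ev (fscl r x) = r * ev x.
Proof. by rewrite /ev mulr_sumr; apply: eq_bigr => i _; rewrite ffunE mulrA. Qed.
Lemma ev_z : ev [ffun => 0] = 0.
Proof. by rewrite /ev big1 // => i _; rewrite ffunE mul0r. Qed.

Definition NPM : premod R.
Proof.
refine (@Premod R {ffun 'I_n -> R} (fun x y => ev x = ev y) [ffun => 0] fadd fopp fscl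
  _ _ _ _ _ _ _ _ _ _ _ _ _ _) => /=.
- by [].
- by move=> x y ->.
- by move=> x y w -> ->.
- by move=> x x' y y'; rewrite !ev_add => -> ->.
- by move=> x x'; rewrite !ev_opp => ->.
- by move=> r x x'; rewrite !ev_scl => ->.
- by move=> x y w; rewrite !ev_add addrA.
- by move=> x y; rewrite !ev_add addrC.
- by move=> x; rewrite ev_add ev_z add0r.
- by move=> x; rewrite ev_add ev_opp ev_z addNr.
- by move=> r r' x; rewrite !ev_scl mulrA.
- by move=> x; rewrite ev_scl mul1r.
- by move=> r x y; rewrite !ev_scl !ev_add !ev_scl mulrDr.
- by move=> r r' x; rewrite ev_scl !ev_add !ev_scl mulrDl.
Defined.

Definition Nq : lmodType R := pq NPM.
Definition fN (C : Nq) : R^o := ev (pq_rep C).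
Lemma fN_class x : fN (pq_class (PM:=NPM) x) = ev x.
Proof. exact: (pq_rep_e (PM:=NPM) x). Qed.
Lemma fN_lin : linear fN.
Proof.
move=> k; elim/pq_ind => x; elim/pq_ind => y.
by rewrite pq_sclE' pq_addE' !fN_class /= ev_add ev_scl.
Qed.
Definition fNL : {linear Nq -> R^o} := HB.pack fN (GRing.isLinear.Build _ _ _ _ fN fN_lin).
Lemma fN_inj : injective fNL.
Proof.
elim/pq_ind => x; elim/pq_ind => y; rewrite /= !fN_class => H.
exact/(pq_eqP (PM:=NPM)).
Qed.
End NQ.

Section FlatRC.
Variables (R : comPzRingType) (S : lmodType R).
Hypothesis Hflat : flat S.

Lemma flat_RC : RC S.
Proof.
move=> n a s Hrel.
pose δ (i : 'I_n) : {ffun 'I_n -> R} := [ffun j => (j == i)%:R].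
have evδ i : ev a (δ i) = a i.
  rewrite /ev (bigD1 i) //= ffunE eqxx mul1r big1 ?addr0 // => j /negPf Hj.
  by rewrite ffunE Hj mul0r.
pose t := [seq (s i, pq_class (PM:=NPM a) (δ i)) | i <- index_enum 'I_n].
have H0 : tens_eq [seq (p.1, fNL a p.2) | p <- t] [::].
  move=> P b hb; rewrite /tens_eval big_nil !big_map.
  have Hb1 : forall u (r : R^o), b u r = b (r *: u) 1.
    move=> u r; rewrite (bilZl hb) -(bilZr hb); congr (b u _).
    by rewrite -[RHS]/(r * 1) mulr1.
  under eq_bigr do rewrite /= fN_class evδ Hb1.
  by rewrite -(bil_sumlF hb) Hrel (bil0l hb).
have [c [Hv Hc]] := cert_of_tens_eq (Hflat (@fN_inj R n a) H0).
have Hc' : forall m, coef t m = coef (flatc c) m by move=> m; rewrite Hc coef_nil add0r.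
pose rep := pq_rep (PM:=NPM a).
pose h (u : S) (x : Nq a) : {ffun 'I_n -> S} := [ffun j => rep x j *: u].
have hadd : forall u u' x, h (u + u') x = h u x + h u' x.
  by move=> u u' x; apply/ffunP => j; rewrite !ffunE scalerDr.
have Hsum := sum_coef_eq hadd Hc'.
rewrite /t big_map (sum_flatc (fun p => h p.1 p.2)) in Hsum.
pose k (i : 'I_n) : {ffun 'I_n -> R} := [ffun j => rep (pq_class (PM:=NPM a) (δ i)) j - δ i j].
have evk i : \sum_j a j * k i j = 0.
  have -> : \sum_j a j * k i j = ev a (rep (pq_class (PM:=NPM a) (δ i))) - ev a (δ i).
    by rewrite /ev -sumrB; apply: eq_bigr => j _; rewrite ffunE mulrBr !(mulrC (a j)).
  have E : ev a (rep (pq_class (PM:=NPM a) (δ i))) = ev a (δ i) := pq_rep_e (PM:=NPM a) (δ i).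
  by rewrite E subrr.
exists ([seq (p.1, [ffun j => \sum_(q <- p.2) q.1 * rep q.2 j]) | p <- c] ++
        [seq (- s i, k i) | i <- index_enum 'I_n]); split.
  move=> q0; rewrite mem_cat => /orP [] /mapP [p Hp ->] /=; last exact: evk.
  under eq_bigr do rewrite ffunE mulr_sumr.
  rewrite exchange_big /= -[RHS](linear0 (fNL a)) -[X in fNL a X](Hv p Hp) /relsum linear_sum.
  apply: eq_bigr => q _; rewrite linearZ /= /fN /ev -[q.1 *: _]/(q.1 * _) mulr_sumr.
  by apply: eq_bigr => j _; rewrite mulrCA (mulrC (a j)).
move=> j; have Hj := congr1 (fun F : {ffun 'I_n -> S} => F j) Hsum.
rewrite /= !sum_ffunE in Hj.
have Hl : \sum_(i <- index_enum 'I_n) h (s i) (pq_class (PM:=NPM a) (δ i)) j = s j + \sum_i k i j *: s i.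
  have -> : \sum_(i <- index_enum 'I_n) h (s i) (pq_class (PM:=NPM a) (δ i)) j =
            \sum_i (δ i j *: s i + k i j *: s i).
    by apply: eq_bigr => i _; rewrite ffunE -scalerDl !ffunE addrC subrK.
  rewrite big_split /=; congr (_ + _).
  rewrite (bigD1 j) //= ffunE eqxx scale1r big1 ?addr0 // => i /negPf Hi.
  by rewrite ffunE eq_sym Hi scale0r.
have Hr : \sum_(p <- c) (\sum_(q <- p.2) h (q.1 *: p.1) q.2) j =
          \sum_(p <- c) (\sum_(q <- p.2) q.1 * rep q.2 j) *: p.1.
  apply: eq_bigr => p _; rewrite sum_ffunE scaler_suml; apply: eq_bigr => q _.
  by rewrite ffunE scalerA mulrC.
rewrite big_cat /= !big_map /=.
under [X in _ = _ + X]eq_bigr do rewrite scalerN.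
rewrite sumrN.
under eq_bigr do rewrite ffunE.
by rewrite -Hr -Hj Hl addrK.
Qed.
End FlatRC.

Unset Implicit Arguments.

Theorem proposition5p5 (R : comPzRingType) (S : lmodType R) :
  [<-> flat S;
       forall (M : lmodType R) (I : finType) (Ms : I -> M -> Prop),
         (forall i, is_submod (Ms i)) -> sharp_prop S Ms;
       forall (I : finType) (Ms : I -> 'rV[R]_2 -> Prop),
         (forall i, is_submod (Ms i)) -> sharp_prop S Ms;
       (forall (f : R) (s : S), f *: s = 0 <-> ideal_ext (fun a : R => a * f = 0) s) /\
       (forall (I : finType) (Is : I -> R -> Prop),
          (forall i, is_ideal (Is i)) ->
          forall s : S,
            ideal_ext (fun a => forall i, Is i a) s <-> (forall i, ideal_ext (Is i) s))].
Proof.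
tfae.
- move=> Hf M I Ms HMs; exact (@sharp_of_RC R S (flat_RC Hf) M I Ms HMs).
- move=> H I Ms HMs; exact: H _ I Ms HMs.
- exact: iii_iv.
- move=> [Ha Hb]; exact: RC_flat (iv_RC Ha Hb).
Qed.
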